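(* For any metric space $(X,d)$, the collection $\{\vec B_r(S): S\in\mathrm{K}(X),\ r\ge0\}$ is a basis for a topology on $\mathrm{K}(X)$.
   Context: $\mathrm{K}(X)$ is the set of non-empty $d$-compact subsets of $X$. For $S,S'\in\mathrm{K}(X)$, the one-sided Hausdorff distance is $\vec d(S,S'):=\max_{x\in S}\min_{x'\in S'}d(x,x')$, and $\vec B_r(S):=\{S'\in\mathrm{K}(X):\vec d(S',S)<r\}$. *)

(* Defs.v *)
From HB Require Import structures.
From mathcomp Require Import all_boot all_order all_algebra.
From mathcomp Require Import all_classical all_reals all_analysis.
Set Implicit Arguments. Unset Strict Implicit. Unset Printing Implicit Defensive.
Import Order.TTheory GRing.Theory Num.Theory.
Local Open Scope classical_set_scope.
Local Open Scope ring_scope.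

Definition Kset {R : realType} (X : metricType R) : set (set X) :=
  [set S | S !=set0 /\ compact S].

(* one-sided Hausdorff distance  max_{x in S} min_{x' in S'} d(x,x')
   (written with sup/inf, which are attained for non-empty compact sets) *)
Definition hdist {R : realType} {X : metricType R} (S S' : set X) : R :=
  sup [set inf [set mdist x x' | x' in S'] | x in S].

Definition vball {R : realType} {X : metricType R} (S : set X) (r : R)
  : set (set X) :=
  [set S' | @Kset R X S' /\ hdist S' S < r].

Definition is_basis_on {T : Type} (D : set T) (B : set (set T)) : Prop :=
  [/\ (forall b, B b -> b `<=` D),
      (forall x, D x -> exists b, B b /\ b x) &
      (forall b1 b2 x, B b1 -> B b2 -> b1 x -> b2 x ->
         exists b3, [/\ B b3, b3 x & b3 `<=` b1 `&` b2])].

(* Main.v *)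
Require Import Defs.
From HB Require Import structures.
From mathcomp Require Import all_boot all_order all_algebra.
From mathcomp Require Import all_classical all_reals all_analysis.
Local Open Scope classical_set_scope.
Local Open Scope ring_scope.
Import Order.TTheory GRing.Theory Num.Theory.
Set Implicit Arguments. Unset Strict Implicit.

Section H.
Context (R : realType) (X : metricType R).

Lemma sum_ge_term (s : seq X) (f : X -> R) x :
  (forall y, 0 <= f y) -> x \in s -> f x <= \sum_(i <- s) f i.
Proof.
move=> f0; elim: s => [//|a s IH]; rewrite in_cons big_cons => /orP[/eqP->|xs].
  by rewrite lerDl sumr_ge0.
by rewrite (le_trans (IH xs)) // lerDr.
Qed.

Lemma compact_mbounded (A : set X) (z : X) : compact A ->
  exists M, forall a, A a -> mdist z a <= M.
Proof.
move=> /compact_near_coveringP cA.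
have := cA R (pinfty_nbhs R) (fun M a => mdist z a <= M) _.
case.
- move=> x Ax; exists (ball x 1, [set M | mdist z x + 1 < M]) => /=.
    split; first exact: nbhsx_ballx.
    by apply: nbhs_pinfty_gt; exact: num_real.
  move=> [a M] [/= xa]; rewrite ballEmdist /= in xa => HM.
  apply: (le_trans (metric_triangle z x a)); apply: ltW.
  by apply: lt_trans HM; rewrite ltrD2l.
- move=> M0 [_ HM]; exists (M0 + 1) => a Aa.
  by apply: (HM (M0 + 1)) => //=; rewrite ltrDl.
Qed.

Definition g (B : set X) (a : X) := inf [set mdist a x' | x' in B].

Lemma g_ge0 B a : B !=set0 -> 0 <= g B a.
Proof.
move=> [b Bb]; apply: lb_le_inf; first by exists (mdist a b), b.
by move=> _ [x _ <-]; exact: mdist_ge0.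
Qed.

Lemma g_le B a b : B b -> g B a <= mdist a b.
Proof.
move=> Bb; apply: ge_inf; last by exists b.
by exists 0 => _ [x _ <-]; exact: mdist_ge0.
Qed.

Lemma hdistE (A B : set X) : hdist A B = sup (g B @` A).
Proof. by []. Qed.

Lemma g_ub (A B : set X) : compact A -> B !=set0 -> has_ubound (g B @` A).
Proof.
move=> cA [b Bb]; have [M HM] := @compact_mbounded A b cA.
exists M => _ [a Aa <-]; apply: (le_trans (g_le a Bb)).
by rewrite metric_sym; exact: HM.
Qed.

Lemma g_le_h (A B : set X) a : compact A -> B !=set0 -> A a -> g B a <= hdist A B.
Proof. by move=> cA nB Aa; apply: ub_le_sup; [exact: g_ub|exists a]. Qed.

Lemma hdist_xx (A : set X) : A !=set0 -> hdist A A = 0.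
Proof.
move=> [a0 Aa0]; have gA : forall a, A a -> g A a = 0.
  move=> a Aa; apply/eqP; rewrite eq_le g_ge0; last by exists a0.
  by rewrite andbT -(mdistxx a); apply: g_le.
rewrite hdistE; apply/eqP; rewrite eq_le; apply/andP; split.
  by apply: ge_sup; [exists 0, a0 => //; exact: gA | move=> _ [a Aa <-]; rewrite gA].
apply: ub_le_sup; last by exists a0 => //; exact: gA.
by exists 0 => _ [a Aa <-]; rewrite gA.
Qed.

Lemma hdist_tri (A B C : set X) : A !=set0 -> compact A -> B !=set0 -> compact B ->
  C !=set0 -> hdist A C <= hdist A B + hdist B C.
Proof.
move=> [a0 Aa0] cA nB cB nC; rewrite [hdist A C]hdistE.
apply: ge_sup; first by exists (g C a0), a0.
move=> _ [a Aa <-].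
have h1 : forall b, B b -> g C a - hdist B C <= mdist a b.
  move=> b Bb; rewrite lerBlDr.
  have : g C a - mdist a b <= g C b.
    case: nC => c Cc; apply: lb_le_inf; first by exists (mdist b c), c.
    move=> _ [c' Cc' <-]; rewrite lerBlDl.
    exact: le_trans (g_le a Cc') (metric_triangle _ _ _).
  rewrite lerBlDr => H; apply: (le_trans H); rewrite addrC lerD2l.
  exact: g_le_h.
have : g C a - hdist B C <= g B a.
  case: nB => b Bb; apply: lb_le_inf; first by exists (mdist a b), b.
  by move=> _ [b' Bb' <-]; exact: h1.
rewrite lerBlDr => H; apply: (le_trans H); rewrite lerD2r.
exact: g_le_h.
Qed.

End H.

Theorem lemma3p12 (R : realType) (X : metricType R) :
  is_basis_on (@Kset R X)
    [set b | exists (S : set X) (r : R), [/\ @Kset R X S, 0 <= r & b = vball S r]].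
Proof.
split.
- by move=> b [S [r [_ _ ->]]] T [].
- move=> S KS; exists (vball S 1); split; first by exists S, 1.
  by split => //; rewrite hdist_xx //; case: KS.
- move=> b1 b2 T [S1 [r1 [KS1 _ ->]]] [S2 [r2 [KS2 _ ->]]] [KT h1] [_ h2].
  pose e := Num.min (r1 - hdist T S1) (r2 - hdist T S2).
  have e0 : 0 < e by rewrite lt_min !subr_gt0 h1 h2.
  exists (vball T e); split.
  + by exists T, e; split => //; exact: ltW.
  + by split => //; rewrite hdist_xx //; case: KT.
  + move=> T' [KT' hT']; case: KT' => nT' cT'; case: KT => nT cT.
    case: KS1 => nS1 cS1; case: KS2 => nS2 cS2.
    split; split => //.
    * apply: (le_lt_trans (hdist_tri nT' cT' nT cT nS1)).
      rewrite -ltrBrDr; apply: (lt_le_trans hT'). by rewrite /e ge_min lexx.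
    * apply: (le_lt_trans (hdist_tri nT' cT' nT cT nS2)).
      rewrite -ltrBrDr; apply: (lt_le_trans hT').
      by rewrite /e ge_min lexx orbT.
Qed.
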